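(* Let $\Omega$ be a finite nonempty set, $\mathcal{A}=2^\Omega$, and let $\mu$ be a $q$-measure on $\mathcal{A}$. If $\phi$ and $\psi$ are quadratic coevents on $\mathcal{A}$ that are both 2-generated by $\mu$, then $\phi=\psi$.
   Context: Let $\Omega$ be a finite nonempty set and $\mathcal{A}=2^\Omega$. A coevent is a map $\phi:\mathcal{A}\to\{0,1\}$ with $\phi(\emptyset)=0$. A coevent $\phi$ is quadratic if for all pairwise disjoint $A,B,C\in\mathcal{A}$: $\phi(A\cup B\cup C)=\phi(A\cup B)\oplus\phi(A\cup C)\oplus\phi(B\cup C)\oplus\phi(A)\oplus\phi(B)\oplus\phi(C)$, where $\oplus$ is addition mod 2. For $f:\Omega\to[0,\infty)$ and a coevent $\phi$, the $q$-integral is $\int f\,d\phi=\int_0^\infty \phi(\{\omega\in\Omega: f(\omega)>\lambda\})\,d\lambda$ (Lebesgue measure in $\lambda$), and for $A\in\mathcal{A}$, $\int_A f\,d\phi=\int f\chi_A\,d\phi$. A $q$-measure is a map $\mu:\mathcal{A}\to[0,\infty)$ such that for all pairwise disjoint $A,B,C\in\mathcal{A}$: $\mu(A\cup B\cup C)=\mu(A\cup B)+\mu(A\cup C)+\mu(B\cup C)-\mu(A)-\mu(B)-\mu(C)$. The $q$-measure $\mu$ 2-generates $\phi$ if there is a symmetric function $f:\Omega\times\Omega\to(0,\infty)$ (i.e. $f(\omega,\omega')=f(\omega',\omega)$) such that for all $A\in\mathcal{A}$, $\mu(A)=\int_A g_A\,d\phi$, where $g_A:\Omega\to[0,\infty)$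 is defined by $g_A(\omega')=\int_A f(\cdot,\omega')\,d\phi$ (the $q$-integral over $A$ of $\omega\mapsto f(\omega,\omega')$). *)

(* Defs.v *)
(* Scalars: an arbitrary real field R (the paper uses the
   real numbers; all notions involved are finite/algebraic). *)
From HB Require Import structures.
From mathcomp Require Import all_boot all_order all_algebra.
Set Implicit Arguments. Unset Strict Implicit. Unset Printing Implicit Defensive.
Import Order.TTheory GRing.Theory Num.Theory.
Local Open Scope ring_scope.

Section QDefs.
Variables (R : realFieldType) (T : finType).

Definition coevent (phi : {set T} -> bool) : Prop := phi set0 = false.

Definition quadratic (phi : {set T} -> bool) : Prop :=
  forall A B C : {set T},
    [disjoint A & B] -> [disjoint A & C] -> [disjoint B & C] ->
    phi (A :|: B :|: C) =
      phi (A :|: B) (+) phi (A :|: C) (+) phi (B :|: C)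
        (+) phi A (+) phi B (+) phi C.

Definition qmeasure (mu : {set T} -> R) : Prop :=
  (forall A, 0 <= mu A) /\
  forall A B C : {set T},
    [disjoint A & B] -> [disjoint A & C] -> [disjoint B & C] ->
    mu (A :|: B :|: C) =
      mu (A :|: B) + mu (A :|: C) + mu (B :|: C) - mu A - mu B - mu C.

(* q-integral  int_0^oo phi({f > lambda}) dlambda  for f : T -> [0,oo).
   Since T is finite, lambda |-> phi({f > lambda}) is a step function:
   for each positive value v of f, on the interval [v', v) where v' is the
   previous value of f (or 0), {f > lambda} = {f >= v}; beyond max f the set
   is empty and phi(empty) = 0. The Lebesgue integral is therefore the
   following finite sum. *)
Definition qint (phi : {set T} -> bool) (f : T -> R) : R :=
  \sum_(v <- undup [seq f x | x <- enum T] | 0 < v)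
     (v - \big[Num.max/0]_(x | f x < v) f x) * (phi [set x | v <= f x])%:R.

Definition qint_on (phi : {set T} -> bool) (A : {set T}) (f : T -> R) : R :=
  qint phi (fun x => if x \in A then f x else 0).

Definition two_generates (mu : {set T} -> R) (phi : {set T} -> bool) : Prop :=
  exists f : T -> T -> R,
    (forall x y, 0 < f x y) /\ (forall x y, f x y = f y x) /\
    forall A : {set T},
      mu A = qint_on phi A (fun w' => qint_on phi A (fun w => f w w')).

End QDefs.

(* Main.v *)
Require Import Defs.
From HB Require Import structures.
From mathcomp Require Import all_boot all_order all_algebra.
From mathcomp Require Import ring lra.
From Stdlib Require Import FunctionalExtensionality.
Import Order.TTheory GRing.Theory Num.Theory.
Local Open Scope ring_scope.

Section Aux.
Variables (R : realFieldType) (T : finType).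
Implicit Types (phi : {set T} -> bool) (g : T -> R).

Definition mb g (v : R) : R := \big[Num.max/0]_(x | g x < v) g x.

Lemma mb_eq g v m j : 0 <= m -> (forall x, g x < v -> g x <= m) ->
  g j < v -> g j = m -> mb g v = m.
Proof.
move=> m0 hm hj ej; apply: le_anti; rewrite /mb bigmax_le //=.
by apply: (bigmax_sup j) => //; rewrite ej.
Qed.

Lemma mb_0 g v : (forall x, g x < v -> g x <= 0) -> mb g v = 0.
Proof. by move=> h; rewrite /mb bigmax_eq_id. Qed.

Lemma qint_seq phi g (s : seq R) : (forall x, 0 <= g x) -> uniq s ->
  (forall v, v \in s -> 0 <= v) ->
  (forall v : R, 0 < v -> (v \in s) = (v \in [seq g x | x <- enum T])) ->
  qint phi g = \sum_(v <- s) (v - mb g v) * (phi [set x | v <= g x])%:R.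
Proof.
move=> g0 us s0 hs.
have -> : \sum_(v <- s) (v - mb g v) * (phi [set x | v <= g x])%:R =
   \sum_(v <- s | 0 < v) (v - mb g v) * (phi [set x | v <= g x])%:R.
  rewrite [RHS]big_mkcond /=; apply: eq_big_seq => v vs.
  case: ltP => // hv.
  have v0 : v = 0 by apply: le_anti; rewrite s0 // andbT.
  rewrite v0 (@mb_0 g 0) ?subrr ?mul0r //.
  by move=> x; rewrite ltNge g0.
rewrite /qint /mb.
rewrite -[LHS]big_filter.
rewrite -[RHS]big_filter.
apply: perm_big; apply: uniq_perm.
- by rewrite filter_uniq // undup_uniq.
- by rewrite filter_uniq.
move=> v; rewrite !mem_filter mem_undup; case: (ltP 0 v) => //= hv.
by rewrite hs.
Qed.

Lemma mb00 g : (forall z, 0 <= g z) -> mb g 0 = 0.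
Proof. by move=> g0; apply: mb_0 => z; rewrite ltNge g0. Qed.

Lemma mem_img g v : (v \in [seq g x | x <- enum T]) = [exists x, g x == v].
Proof.
apply/mapP/existsP => [[x _ ->]|[x /eqP <-]]; first by exists x.
by exists x; rewrite ?mem_enum.
Qed.

Lemma qint1 phi g a (x : R) : 0 <= x -> (forall z, g z = if z == a then x else 0) ->
  qint phi g = x * (phi [set a])%:R.
Proof.
move=> x0 hg.
have g0 : forall z, 0 <= g z by move=> z; rewrite hg; case: ifP.
rewrite (@qint_seq _ _ [:: x]) //; last first.
- move=> v hv; rewrite mem_img inE; apply/eqP/existsP => [->|[z /eqP]].
    by exists a; rewrite hg eqxx.
  by rewrite hg; case: ifP => // _ e; rewrite e ltxx in hv.
- by move=> v; rewrite inE => /eqP ->.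
rewrite big_seq1.
have [->|xp] := eqVneq x 0; first by rewrite mb00 // subrr !mul0r.
have xpos : 0 < x by rewrite lt_def xp x0.
rewrite (@mb_0 g x) ?subr0; last first.
  by move=> z; rewrite hg; case: ifP => // _; rewrite ltxx.
congr (_ * (phi _)%:R); apply/setP => z; rewrite !inE hg.
by case: ifP => _; rewrite ?lexx // leNgt xpos.
Qed.

Lemma qint2lt phi g a b (x y : R) : a != b -> 0 <= x -> x < y ->
  (forall z, g z = if z == a then x else if z == b then y else 0) ->
  qint phi g = x * (phi [set a; b])%:R + (y - x) * (phi [set b])%:R.
Proof.
move=> ab x0 xy hg.
have ba : b != a by rewrite eq_sym.
have y0 : 0 <= y by apply: le_trans (ltW xy).
have g0 : forall z, 0 <= g z by move=> z; rewrite hg; case: ifP => //; case: ifP.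
have xny : x != y by rewrite lt_eqF.
rewrite (@qint_seq _ _ [:: x; y]) //; first last.
- move=> v hv; rewrite mem_img !inE; apply/orP/existsP => [[/eqP->|/eqP->]|[z /eqP]].
  + by exists a; rewrite hg eqxx.
  + by exists b; rewrite hg (negbTE ba) eqxx.
  rewrite hg; case: ifP => _; first by move=> <-; left.
  case: ifP => _; first by move=> <-; right.
  by move=> e; rewrite e ltxx in hv.
- by move=> v; rewrite !inE => /orP[/eqP->|/eqP->].
- by rewrite /= inE xny.
rewrite big_cons big_seq1.
have -> : mb g y = x.
  apply: (@mb_eq g y x a x0); last by rewrite hg eqxx.
  - move=> z; rewrite hg; case: ifP => // _; case: ifP => // _.
    by rewrite ltxx.
  - by rewrite hg eqxx.
have -> : [set z | y <= g z] = [set b].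
  apply/setP => z; rewrite !inE hg.
  case: (eqVneq z a) => [->|za]; first by rewrite (negbTE ab) leNgt xy.
  case: ifP => // _; first by rewrite lexx.
  by rewrite leNgt (le_lt_trans x0 xy).
congr (_ + _).
have [->|xp] := eqVneq x 0; first by rewrite mb00 // subrr !mul0r.
have xpos : 0 < x by rewrite lt_def xp x0.
rewrite (@mb_0 g x) ?subr0; last first.
  move=> z; rewrite hg; case: ifP => _; first by rewrite ltxx.
  by case: ifP => // _; rewrite ltNge (ltW xy).
congr (_ * (phi _)%:R); apply/setP => z; rewrite !inE hg.
case: ifP => _; first by rewrite lexx.
by case: ifP => _; [rewrite (ltW xy)| rewrite leNgt xpos].
Qed.

Lemma qint2eq phi g a b (x : R) : a != b -> 0 <= x ->
  (forall z, g z = if z == a then x else if z == b then x else 0) ->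
  qint phi g = x * (phi [set a; b])%:R.
Proof.
move=> ab x0 hg.
have g0 : forall z, 0 <= g z by move=> z; rewrite hg; case: ifP => //; case: ifP.
rewrite (@qint_seq _ _ [:: x]) //; last first.
- move=> v hv; rewrite mem_img inE; apply/eqP/existsP => [->|[z /eqP]].
    by exists a; rewrite hg eqxx.
  by rewrite hg; case: ifP => // _; case: ifP => // _ e; rewrite e ltxx in hv.
- by move=> v; rewrite inE => /eqP ->.
rewrite big_seq1.
have [->|xp] := eqVneq x 0; first by rewrite mb00 // subrr !mul0r.
have xpos : 0 < x by rewrite lt_def xp x0.
rewrite (@mb_0 g x) ?subr0; last first.
  by move=> z; rewrite hg; case: ifP => _; [|case: ifP => // _]; rewrite ltxx.
congr (_ * (phi _)%:R); apply/setP => z; rewrite !inE hg.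
by case: ifP => _; [|case: ifP => _]; rewrite ?lexx // leNgt xpos.
Qed.

Definition Fm (x y r p q : R) :=
  Num.min x y * r + (x - Num.min x y) * p + (y - Num.min x y) * q.

Lemma qint2 phi g a b (x y : R) : a != b -> 0 <= x -> 0 <= y ->
  (forall z, g z = if z == a then x else if z == b then y else 0) ->
  qint phi g = Fm x y (phi [set a; b])%:R (phi [set a])%:R (phi [set b])%:R.
Proof.
move=> ab x0 y0 hg; rewrite /Fm.
case: (ltgtP x y) => hxy.
- by rewrite (@qint2lt phi g a b x y ab x0 hxy hg) subrr mul0r addr0.
- have ba : b != a by rewrite eq_sym.
  have hg' : forall z, g z = if z == b then y else if z == a then x else 0.
    move=> z; rewrite hg; case: (eqVneq z a) => [->|//]; by rewrite (negbTE ab).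
  rewrite (@qint2lt phi g b a y x ba y0 hxy hg') subrr mul0r addr0.
  by rewrite setUC addrC.
- rewrite hxy in hg *; rewrite (@qint2eq phi g a b y ab y0 hg) subrr !mul0r !addr0.
  by [].
Qed.


Lemma Fm_min (x y r p q : R) : Fm x y r p q =
  (if x <= y then x * r + (y - x) * q else y * r + (x - y) * p).
Proof.
rewrite /Fm; case: ifPn => h.
  by rewrite (min_l h) subrr mul0r addr0.
by rewrite -ltNge in h; rewrite (min_r (ltW h)) subrr mul0r addr0.
Qed.

Definition D (p q : bool) (m ma mb : R) : bool :=
  if p then (if q then (ma <= m) && (mb <= m) else m == ma)
  else (if q then m == mb else m != 0).

Ltac solveb :=
  first [ by []
        | (apply/esym/andP; split; lra)
        | (apply/esym/eqP; lra)
        | (apply/esym/negbTE; rewrite negb_and -!ltNge; apply/orP;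
           first [left; lra | right; lra])
        | (apply/esym/negbTE; rewrite neq_lt; apply/orP;
           first [left; lra | right; lra])
        | (apply/esym/negbTE; rewrite negbK; apply/eqP; lra)
        | (apply/esym; rewrite neq_lt; apply/orP;
           first [left; lra | right; lra]) ].

Lemma decide (u v w : R) (p q r : bool) : 0 < u -> 0 < v -> 0 < w ->
  let F x y := Fm x y r%:R p%:R q%:R in
  r = D p q (F (F u w) (F w v)) (u * p%:R) (v * q%:R).
Proof.
move=> u0 v0 w0 F; rewrite /F {F} /D.
case: p; case: q; case: r => /=; rewrite (Fm_min u w) (Fm_min w v).
all: case: ifPn => h1; case: ifPn => h2; rewrite Fm_min; case: ifPn => h3;
  rewrite -?ltNge in h1 h2 h3.
all: rewrite ?mulr1n ?mulr0n ?mulr1 ?mulr0 ?addr0 ?add0r.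
all: try solveb.
Qed.

Lemma Fm_ge0 (x y r p q : R) : 0 <= x -> 0 <= y -> 0 <= r -> 0 <= p -> 0 <= q ->
  0 <= Fm x y r p q.
Proof.
move=> x0 y0 r0 p0 q0; rewrite Fm_min; case: ifPn => h.
  by rewrite addr_ge0 // mulr_ge0 // subr_ge0.
rewrite -ltNge in h.
by rewrite addr_ge0 // mulr_ge0 // subr_ge0 ltW.
Qed.

Section Gen.
Variables (mu : {set T} -> R) (phi : {set T} -> bool) (f : T -> T -> R).
Hypothesis fpos : forall x y, 0 < f x y.
Hypothesis fsym : forall x y, f x y = f y x.
Hypothesis hf : forall A : {set T},
  mu A = qint_on phi A (fun w' => qint_on phi A (fun w => f w w')).

Lemma gen1 a : mu [set a] = f a a * (phi [set a])%:R.
Proof.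
rewrite hf /qint_on.
have p0 : 0 <= (phi [set a])%:R :> R by case: (phi _).
rewrite (@qint1 phi _ a (f a a * (phi [set a])%:R)); last first.
- move=> z; rewrite inE; case: eqP => [->|//].
  apply: qint1; first exact: ltW.
  by move=> y; rewrite inE; case: eqP => [->|].
- by rewrite mulr_ge0 // ltW.
by case: (phi _); rewrite ?mulr1 ?mulr0.
Qed.

Lemma gen2 a b : a != b -> mu [set a; b] =
  let F x y := Fm x y (phi [set a; b])%:R (phi [set a])%:R (phi [set b])%:R in
  F (F (f a a) (f a b)) (F (f a b) (f b b)).
Proof.
move=> ab /=; rewrite hf /qint_on.
have b0 : forall c : bool, 0 <= c%:R :> R by case.
have hF : forall x y, 0 <= x -> 0 <= y -> 0 <= Fm x y (phi [set a; b])%:R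
    (phi [set a])%:R (phi [set b])%:R.
  by move=> x y x0 y0; rewrite Fm_ge0.
apply: qint2 => //; try exact: hF (ltW (fpos _ _)) (ltW (fpos _ _)).
move=> z; rewrite !inE; case: (eqVneq z a) => [->|za] /=.
  apply: qint2 => //; try exact: ltW.
  move=> y; rewrite !inE; case: (eqVneq y a) => [->//|ya] /=.
  by case: (eqVneq y b) => [->|//]; rewrite fsym.
case: (eqVneq z b) => [->|//] /=.
apply: qint2 => //; try exact: ltW.
by move=> y; rewrite !inE; case: (eqVneq y a) => [->//|ya] /=; case: (eqVneq y b) => [->|].
Qed.

Lemma genD a b : a != b -> phi [set a; b] =
  D (phi [set a]) (phi [set b]) (mu [set a; b]) (mu [set a]) (mu [set b]).
Proof.
move=> ab; rewrite (gen2 a b ab) !gen1 /=.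
by apply: decide.
Qed.

Lemma gen1b a : phi [set a] = (mu [set a] != 0).
Proof.
rewrite gen1; have := fpos a a; case: (phi _) => h /=.
  by rewrite mulr1 (gt_eqF h).
by rewrite mulr0 eqxx.
Qed.
End Gen.
End Aux.

Theorem theorem5p3 (R : realFieldType) (T : finType) (HT : (0 < #|T|)%N)
  (mu : {set T} -> R) (phi psi : {set T} -> bool) :
  qmeasure mu ->
  coevent phi -> quadratic phi ->
  coevent psi -> quadratic psi ->
  two_generates mu phi -> two_generates mu psi ->
  phi = psi.
Proof.
move=> _ c1 q1 c2 q2 [f1 [fp1 [fs1 h1]]] [f2 [fp2 [fs2 h2]]].
have S1 : forall a, phi [set a] = psi [set a].
  move=> a; rewrite (@gen1b R T mu phi f1 fp1 fs1 h1 a) (@gen1b R T mu psi f2 fp2 fs2 h2 a) //.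
have S2 : forall a b, a != b -> phi [set a; b] = psi [set a; b].
  move=> a b ab; rewrite (@genD R T mu phi f1 fp1 fs1 h1 a b ab) (@genD R T mu psi f2 fp2 fs2 h2 a b ab).
  by rewrite !S1.
apply: functional_extensionality => A.
suff H : forall n (A : {set T}), (#|A| <= n)%N -> phi A = psi A by exact: (H #|A|).
elim=> [|n IH] {}A hA.
  by rewrite leqn0 in hA; rewrite (cards0_eq (eqP hA)) c1 c2.
case: (ltnP #|A| n.+1) => hA'; first by apply: IH; rewrite -ltnS.
have eA : #|A| = n.+1 by apply/eqP; rewrite eqn_leq hA hA'.
have IH' : forall X : {set T}, X \proper A -> phi X = psi X.
  by move=> X /proper_card; rewrite eA ltnS => /IH.
clear hA hA'.
case: n IH IH' eA => [|[|n]] IH IH' eA.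
- have /cards1P [a ->] : #|A| == 1%N by rewrite eA.
  exact: S1.
- have /cards2P [a [b [ab ->]]] : #|A| == 2%N by rewrite eA.
  exact: S2.
have /card_gt0P [a aA] : (0 < #|A|)%N by rewrite eA.
have eA1 : #|A :\ a| = n.+2 by have := cardsD1 a A; rewrite aA eA add1n => -[].
have /card_gt0P [b bA] : (0 < #|A :\ a|)%N by rewrite eA1.
have eA2 : #|A :\ a :\ b| = n.+1 by have := cardsD1 b (A :\ a); rewrite bA eA1 add1n => -[].
have /card_gt0P [c cA] : (0 < #|A :\ a :\ b|)%N by rewrite eA2.
move: (bA) (cA); rewrite !inE => /andP[ba bA'] /andP[cb /andP[ca cA']].
have eqA : A = [set a] :|: [set b] :|: (A :\ a :\ b).
  apply/setP => x; rewrite !inE.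
  case: (eqVneq x a) => [->|xa] /=; first by rewrite aA.
  by case: (eqVneq x b) => [->|xb] /=; rewrite ?bA'.
have d1 : [disjoint [set a] & [set b]] by rewrite disjoints1 inE eq_sym.
have d2 : [disjoint [set a] & A :\ a :\ b] by rewrite disjoints1 !inE eqxx andbF.
have d3 : [disjoint [set b] & A :\ a :\ b] by rewrite disjoints1 !inE eqxx.
have e1 := q1 _ _ _ d1 d2 d3; have e2 := q2 _ _ _ d1 d2 d3.
rewrite -eqA in e1 e2; rewrite e1 e2.
have CA : A :\ a :\ b \subset A.
  by apply: subset_trans (subsetDl _ _) (subsetDl _ _).
have P : forall (X : {set T}) w, X \subset A -> w \in A -> w \notin X -> phi X = psi X.
  by move=> X w XA wA wX; apply: IH'; apply/properP; split => //; exists w.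
rewrite (@P ([set a] :|: [set b]) c); first last.
- by rewrite !inE negb_or ca cb.
- by [].
- by rewrite subUset !sub1set aA bA'.
rewrite (@P ([set a] :|: (A :\ a :\ b)) b); first last.
- by rewrite !inE eqxx /= orbF.
- by [].
- by rewrite subUset sub1set aA CA.
rewrite (@P ([set b] :|: (A :\ a :\ b)) a); first last.
- by rewrite !inE eqxx /= andbF orbF eq_sym.
- by [].
- by rewrite subUset sub1set bA' CA.
rewrite (@P [set a] b); first last.
- by rewrite inE.
- by [].
- by rewrite sub1set.
rewrite (@P [set b] a); first last.
- by rewrite inE eq_sym.
- by [].
- by rewrite sub1set.
rewrite (@P (A :\ a :\ b) a) //.
by rewrite !inE eqxx andbF.
Qed.
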